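(* Let $a_1,\dots,a_n\in\mathbb{Z}_{\ge0}$ with $a_1+\cdots+a_n=A$, let $t_1,\dots,t_n\in\mathbb{Z}_{\ge0}$ with $t_1+\cdots+t_n=T$, let $B\in\mathbb{Z}$, and let $p_1,\dots,p_n\in\mathbb{Z}/2$. Then $$\sum_{\substack{f_1+\cdots+f_n=B\\ f_i\equiv p_i \ (\mathrm{mod}\ 2)}}\ \prod_{i=1}^n\binom{2a_i}{f_i}(f_i)_{t_i}=\sum_{\substack{f_1+\cdots+f_n=2A-B+T\\ f_i\equiv p_i+t_i\ (\mathrm{mod}\ 2)}}\ \prod_{i=1}^n\binom{2a_i}{f_i}(f_i)_{t_i},$$ where both sums run over $(f_1,\dots,f_n)\in\mathbb{Z}^n$.
   Context: $\binom{m}{f}$ is the usual binomial coefficient, zero when $f<0$ or $f>m$. $(f)_t:=f(f-1)\cdots(f-t+1)$ is the falling factorial (Pochhammer symbol), with $(f)_0=1$. *)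

(* Defs.v *)
From HB Require Import structures.
From mathcomp Require Import all_boot all_order all_algebra.
Set Implicit Arguments. Unset Strict Implicit. Unset Printing Implicit Defensive.
Import Order.TTheory GRing.Theory Num.Theory.
Local Open Scope ring_scope.

(* Binomial coefficient binom(m, f) for m : nat, f : int; zero when f < 0
   (and, via 'C, when f > m). *)
Definition binz (m : nat) (f : int) : int :=
  match f with Posz k => ('C(m, k))%:Z | Negz _ => 0 end.

Definition fallz (f : int) (t : nat) : int :=
  \prod_(j < t) (f - (j : nat)%:Z).

(* Parity of an integer, as an element of Z/2 = bool. *)
Definition parz (f : int) : bool := odd `|f|%N.

(* Sum of F over all f in the integer box [-N, N]^n.  Used to express a sum
   over f in Z^n whose summand vanishes outside this box. *)
Definition boxsum (n N : nat) (F : ('I_n -> int) -> int) : int :=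
  \sum_(k : {ffun 'I_n -> 'I_(N + N).+1}) F (fun i => (k i : nat)%:Z - N%:Z).

(* Main.v *)
Require Import Defs.
From HB Require Import structures.
From mathcomp Require Import all_boot all_order all_algebra zify ring.
From Stdlib Require Import FunctionalExtensionality.
Import Order.TTheory GRing.Theory Num.Theory.
Local Open Scope ring_scope.
Set Implicit Arguments. Unset Strict Implicit.

Lemma fallzE (m t : nat) : fallz (Posz m) t = (m ^_ t)%:Z.
Proof.
elim: t => [|t IH]; first by rewrite /fallz big_ord0 ffactn0.
rewrite /fallz big_ord_recr /= -/(fallz _ t) IH ffactnSr PoszM.
case: (leqP t m) => h; first by rewrite subzn.
by rewrite ffact_small ?mul0r.
Qed.

Lemma binffact_refl (n m t : nat) : (t <= m)%N -> (m <= n)%N ->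
  ('C(n, m) * m ^_ t = 'C(n, n + t - m) * (n + t - m) ^_ t)%N.
Proof.
move=> htm hmn.
have hpos : (0 < (m - t)`! * (n - m)`!)%N by rewrite muln_gt0 !fact_gt0.
apply/eqP; rewrite -(eqn_pmul2r hpos); apply/eqP.
have e1 : ('C(n, m) * m ^_ t * ((m - t)`! * (n - m)`!) = n`!)%N.
  by rewrite -(bin_fact hmn) -(ffact_fact htm); ring.
have e2 : ('C(n, n + t - m) * (n + t - m) ^_ t * ((m - t)`! * (n - m)`!) = n`!)%N.
  have h1 : (n + t - m - t = n - m)%N by lia.
  have h2 : (n - (n + t - m) = m - t)%N by lia.
  rewrite -(bin_fact (_ : n + t - m <= n)%N); last by lia.
  rewrite -(ffact_fact (_ : t <= n + t - m)%N); last by lia.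
  rewrite h1 h2; ring.
by rewrite e1 e2.
Qed.

Definition gz (n t : nat) (x : int) : int := binz n x * fallz x t.
Definition inr (n t : nat) (x : int) : bool := (t%:Z <= x) && (x <= n%:Z).
Definition rz (n t : nat) (x : int) : int := if inr n t x then (n + t)%:Z - x else x.

Lemma inr_rz n t x : inr n t x -> inr n t (rz n t x).
Proof. rewrite /rz /inr => /andP[h1 h2]; rewrite h1 h2 /=; apply/andP; split; lia. Qed.

Lemma rzK n t x : rz n t (rz n t x) = x.
Proof.
rewrite {2}/rz; case: ifP => h; last by rewrite /rz h.
have := inr_rz h; rewrite /rz h => ->; ring.
Qed.

Lemma gz_out n t x : ~~ inr n t x -> gz n t x = 0.
Proof.
rewrite /inr /gz; case: x => [m|m] h; last by rewrite /= mul0r.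
rewrite /= fallzE; case: (leqP m n) => hmn.
  rewrite ffact_small ?mulr0 //; lia.
by rewrite bin_small.
Qed.

Lemma gz_rz n t x : gz n t (rz n t x) = gz n t x.
Proof.
rewrite /rz; case: ifP => // h.
move: h; rewrite /inr; case: x => [m|m] //= /andP[h1 h2].
rewrite subzn; last by lia.
rewrite /gz /= !fallzE -!PoszM; congr Posz.
by rewrite (binffact_refl (n:=n) (m:=m) (t:=t)) //; lia.
Qed.

Lemma parz_rz n t x : ~~ odd n -> inr n t x -> parz (rz n t x) = parz x (+) odd t.
Proof.
rewrite /rz => hn h; rewrite h; move: h; rewrite /inr; case: x => [m|m] //= /andP[h1 h2].
rewrite subzn; last by lia.
rewrite /parz /= oddB; last by lia.
by rewrite oddD (negbTE hn); case: (odd t); case: (odd m).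
Qed.

Section Main.
Variables (n : nat) (a t : 'I_n -> nat) (A T : nat) (B : int) (p : 'I_n -> bool).
Hypotheses (hA : (\sum_(i < n) a i)%N = A) (hT : (\sum_(i < n) t i)%N = T).

Lemma key (f : 'I_n -> int) :
  (if (\sum_(i < n) rz (2 * a i) (t i) (f i) == (2 * A)%:Z - B + T%:Z)
       && [forall i, parz (rz (2 * a i) (t i) (f i)) == (p i (+) odd (t i))]
   then \prod_(i < n) gz (2 * a i) (t i) (rz (2 * a i) (t i) (f i)) else 0)
  = (if (\sum_(i < n) f i == B) && [forall i, parz (f i) == p i]
     then \prod_(i < n) gz (2 * a i) (t i) (f i) else 0).
Proof.
have -> : \prod_(i < n) gz (2 * a i) (t i) (rz (2 * a i) (t i) (f i)) = \prod_(i < n) gz (2 * a i) (t i) (f i).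
  by apply: eq_bigr => i _; rewrite gz_rz.
case: (boolP [forall i, inr (2 * a i) (t i) (f i)]) => hin.
  have hs : \sum_(i < n) rz (2 * a i) (t i) (f i) = (2 * A + T)%N%:Z - \sum_(i < n) f i.
    rewrite (eq_bigr (fun i => (2 * a i + t i)%N%:Z - f i)); last first.
      by move=> i _; rewrite /rz (forallP hin i) PoszD.
    rewrite sumrB; congr (_ - _).
    have -> : (2 * A + T = \sum_(i < n) (2 * a i + t i))%N.
      by rewrite -hA -hT big_split /= big_distrr.
    by rewrite (big_morph Posz PoszD (erefl _)).
  have -> : (\sum_(i < n) rz (2 * a i) (t i) (f i) == (2 * A)%:Z - B + T%:Z) = (\sum_(i < n) f i == B).
    rewrite hs; apply/eqP/eqP => h; lia.
  congr (if _ && _ then _ else _).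
  apply: eq_forallb => i; rewrite parz_rz ?(forallP hin i) //; last by rewrite oddM.
  by case: (parz (f i)); case: (p i); case: (odd (t i)).
have -> : \prod_(i < n) gz (2 * a i) (t i) (f i) = 0.
  apply/eqP/prodf_eq0; move: hin; rewrite negb_forall => /existsP[i hi].
  by exists i => //; rewrite gz_out.
by case: ifP; case: ifP.
Qed.
End Main.

Lemma rz_box (N nn t : nat) (x : int) : (nn <= N)%N -> - N%:Z <= x <= N%:Z ->
  0 <= rz nn t x + N%:Z <= (N + N)%N%:Z.
Proof.
move=> hN /andP[h1 h2]; rewrite /rz /inr; case: ifP => [/andP[h3 h4]|_]; apply/andP; split; lia.
Qed.

Definition psi (n N : nat) (a t : 'I_n -> nat) (k : {ffun 'I_n -> 'I_(N + N).+1}) :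
  {ffun 'I_n -> 'I_(N + N).+1} :=
  [ffun i => inord (absz (rz (2 * a i) (t i) ((k i : nat)%:Z - N%:Z) + N%:Z))].

Lemma psiE (n N : nat) (a t : 'I_n -> nat) k i : (2 * a i <= N)%N ->
  ((@psi n N a t k i : nat)%:Z - N%:Z) = rz (2 * a i) (t i) ((k i : nat)%:Z - N%:Z).
Proof.
move=> hN; rewrite /psi ffunE.
have hk := ltn_ord (k i).
have /andP[h1 h2] := @rz_box N (2 * a i) (t i) ((k i : nat)%:Z - N%:Z) hN
  (ltac:(apply/andP; split; lia)).
rewrite inordK; last by lia.
rewrite abszE ger0_norm //; ring.
Qed.

Lemma psiK (n N : nat) (a t : 'I_n -> nat) : (forall i, 2 * a i <= N)%N ->
  cancel (@psi n N a t) (@psi n N a t).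
Proof.
move=> ha k; apply/ffunP => i; apply/val_inj => /=.
have e := @psiE n N a t (psi a t k) i (ha i).
rewrite (@psiE n N a t k i (ha i)) rzK in e.
lia.
Qed.

Theorem lemmaA1 (n : nat) (a t : 'I_n -> nat) (A T : nat) (B : int)
    (p : 'I_n -> bool)
    (hA : (\sum_(i < n) a i)%N = A) (hT : (\sum_(i < n) t i)%N = T) :
  @boxsum n (2 * A)%N
    (fun f => if (\sum_(i < n) f i == B) && [forall i, parz (f i) == p i]
              then \prod_(i < n) (binz (2 * a i)%N (f i) * fallz (f i) (t i))
              else 0)
  =
  @boxsum n (2 * A)%N
    (fun f => if (\sum_(i < n) f i == (2 * A)%:Z - B + T%:Z)
                 && [forall i, parz (f i) == (p i (+) odd (t i))]
              then \prod_(i < n) (binz (2 * a i)%N (f i) * fallz (f i) (t i))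
              else 0).
Proof.
have ha i : (2 * a i <= 2 * A)%N.
  rewrite -hA (bigD1 i) //=; lia.
rewrite /boxsum [in RHS](reindex_inj (can_inj (psiK t ha))).
apply: eq_bigr => k _.
have E i : (@psi n (2 * A) a t k i : nat)%:Z - (2 * A)%N%:Z =
          rz (2 * a i) (t i) ((k i : nat)%:Z - (2 * A)%N%:Z).
  exact: (@psiE n (2 * A) a t k i (ha i)).
under [in RHS]eq_bigr => i _ do rewrite E.
under [in RHS]eq_forallb => i do rewrite E.
under [X in _ = if _ then X else _]eq_bigr => i _ do rewrite E.
by move: (@key n a t A T B p hA hT (fun i => (k i : nat)%:Z - (2 * A)%N%:Z)); rewrite /gz /= => ->.
Qed.
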